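(* Let $\mathcal{D}\subset\mathbb{R}^d$ be bounded and convex with non-empty interior. Assume $\mathcal{C}\subset\Gamma\backslash G$ is compact and $\theta>\overline\rho(\mathcal{C},\mathcal{D}\times(0,1])$. Then there is a constant $C_\theta<\infty$ such that $\mathcal{G}(M)\leq C_\theta$ for all $M$ with $\Gamma M\in\mathcal{C}D(\theta)^{-1}$.
   Context: Let $G=\operatorname{SL}(d+1,\mathbb{R})$ and $\Gamma=\operatorname{SL}(d+1,\mathbb{Z})$; vectors are row vectors and $\mathbb{Z}^{d+1}M$ is the lattice spanned by the rows of $M$. For $M\in G$, $t\in\mathcal{D}$: $F(M,t)=\min\{y>0\mid (x,y)\in\mathbb{Z}^{d+1}M,\ x+t\in\mathcal{D}\}$ ($x\in\mathbb{R}^d$, $y\in\mathbb{R}$), and $\infty$ if no minimum exists. $\mathcal{G}(M)$ is the number of distinct values the function $t\mapsto F(M,t)$ attains as $t$ runs over $\mathcal{D}$. For a bounded $\mathcal{A}\subset\mathbb{R}^{d+1}$ with non-empty interior, $\rho(M,\mathcal{A})=\inf\{\theta>0\mid \theta\mathcal{A}+\mathbb{Z}^{d+1}M=\mathbb{R}^{d+1}\}$, and for $\mathcal{C}\subset\Gamma\backslash G$, $\overline\rho(\mathcal{C},\mathcal{A})=\sup_{\Gamma M\in\mathcal{C}}\rho(M,\mathcal{A})$. For $\theta>0$, $D(\theta)=\operatorname{diag}(\theta,\ldots,\theta,\theta^{-d})\in G$, and $\mathcal{C}D(\theta)^{-1}=\{\Gamma MD(\theta)^{-1}\mid\Gamma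 M\in\mathcal{C}\}$. *)

(* Defs.v *)
From HB Require Import structures.
From mathcomp Require Import all_boot all_order all_algebra.
From mathcomp Require Import all_classical all_reals all_analysis.
Set Implicit Arguments. Unset Strict Implicit. Unset Printing Implicit Defensive.
Import Order.TTheory GRing.Theory Num.Theory.
Import numFieldNormedType.Exports.
Local Open Scope classical_set_scope.
Local Open Scope ring_scope.

(* Vectors of R^(d+1) are row vectors 'rV[R]_(d.+1); the first d coordinates
   are x, the last one (index ord_max) is y. *)
Section Defs.
Variable R : realType.
Variable d : nat.

Definition xpart (v : 'rV[R]_(d.+1)) : 'rV[R]_d :=
  \row_(i < d) v 0 (widen_ord (leqnSn d) i).
Definition ypart (v : 'rV[R]_(d.+1)) : R := v 0 ord_max.

Definition is_int (x : R) : Prop := exists z : int, x = z%:~R.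

Definition SLR : set 'M[R]_(d.+1) := [set M | \det M = 1].
Definition SLZ : set 'M[R]_(d.+1) :=
  [set M | \det M = 1 /\ forall i j, is_int (M i j)].

Definition lattice (M : 'M[R]_(d.+1)) : set 'rV[R]_(d.+1) :=
  [set v | exists a : 'rV[int]_(d.+1), v = map_mx intr a *m M].

Definition convex (D : set 'rV[R]_d) : Prop :=
  forall x y (l : R), D x -> D y -> 0 <= l -> l <= 1 -> D (l *: x + (1 - l) *: y).

Definition Fset (D : set 'rV[R]_d) (M : 'M[R]_(d.+1)) (t : 'rV[R]_d) : set R :=
  [set y | 0 < y /\ exists v, lattice M v /\ ypart v = y /\ D (xpart v + t)].

Definition F (D : set 'rV[R]_d) (M : 'M[R]_(d.+1)) (t : 'rV[R]_d) : \bar R :=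
  if `[< exists y, Fset D M t y /\ forall z, Fset D M t z -> y <= z >]
  then ereal_inf (EFin @` Fset D M t) else +oo%E.

(* GG(M) <= n : the function t |-> F(M,t), t in D, attains at most n distinct values *)
Definition GG_le (D : set 'rV[R]_d) (M : 'M[R]_(d.+1)) (n : nat) : Prop :=
  exists s : seq (\bar R), (size s <= n)%N /\ forall t, D t -> F D M t \in s.

Definition covers (M : 'M[R]_(d.+1)) (A : set 'rV[R]_(d.+1)) (th : R) : Prop :=
  forall v : 'rV[R]_(d.+1), exists a l, A a /\ lattice M l /\ v = th *: a + l.

Definition rho (M : 'M[R]_(d.+1)) (A : set 'rV[R]_(d.+1)) : \bar R :=
  ereal_inf [set th%:E | th in [set th : R | 0 < th /\ covers M A th]].

(* C is represented by its preimage in G (a left-Gamma-invariant set of matrices) *)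
Definition rhobar (C : set 'M[R]_(d.+1)) (A : set 'rV[R]_(d.+1)) : \bar R :=
  ereal_sup [set rho M A | M in C].

(* preimage in G of the image of K in Gamma\G *)
Definition GammaK (K : set 'M[R]_(d.+1)) : set 'M[R]_(d.+1) :=
  [set M | exists g k, SLZ g /\ K k /\ M = g *m k].

Definition cyl (D : set 'rV[R]_d) : set 'rV[R]_(d.+1) :=
  [set v | D (xpart v) /\ 0 < ypart v <= 1].

Definition Dmat (th : R) : 'M[R]_(d.+1) :=
  \matrix_(i, j) (if i == j then (if i == ord_max then th ^- d else th) else 0).

(* preimage in G of C D(theta)^{-1} *)
Definition shifted (C : set 'M[R]_(d.+1)) (th : R) : set 'M[R]_(d.+1) :=
  [set M | exists g M', SLZ g /\ C M' /\ M = g *m M' *m invmx (Dmat th)].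

End Defs.

(* Main.v *)
Require Import Defs.
From HB Require Import structures.
From mathcomp Require Import all_boot all_order all_algebra.
From mathcomp Require Import all_classical all_reals all_analysis.
From mathcomp Require Import perm zify ring lra.
Import Order.TTheory GRing.Theory Num.Theory.
Import numFieldNormedType.Exports.
Local Open Scope classical_set_scope.
Local Open Scope ring_scope.

Section Helpers.
Variable R : realType.

Lemma entry_le_norm {m n} (A : 'M[R]_(m,n)) i j : `|A i j| <= `|A|.
Proof. rewrite [X in _ <= X]mx_normrE. exact: (le_bigmax _ _ (i,j)). Qed.

Lemma int_mx n (g : 'M[R]_n) : (forall i j, is_int (g i j)) ->
  exists G : 'M[int]_n, g = map_mx intr G.
Proof.
move=> hg.
have [f hf] := @choice _ _ (fun (ij : 'I_n * 'I_n) (z : int) => g ij.1 ij.2 = z%:~R)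
  (fun ij => hg ij.1 ij.2).
exists (\matrix_(i, j) f (i, j)); apply/matrixP => i j; rewrite !mxE; exact: (hf (i,j)).
Qed.

Lemma cofactor_bound n (A : 'M[R]_n) (B : R) : 1 <= B ->
  (forall i j, `|A i j| <= B) -> forall i j,
  `|cofactor A i j| <= n`!%:R * B ^+ n.
Proof.
move=> B1 hA i j; rewrite expand_cofactor.
apply: (le_trans (ler_norm_sum _ _ _)).
apply: (@le_trans _ _ (\sum_s B ^+ n)); last first.
  rewrite sumr_const mulr_natl -card_Sn.
  by rewrite (@eq_card _ xpredT (perm_of 'I_n)).


apply: (@le_trans _ _ (\sum_(s : {perm 'I_n} | s i == j) B ^+ n)).
  apply: ler_sum => s _; rewrite normrM normrX normrN1 expr1n mul1r normr_prod.
  apply: (@le_trans _ _ (\prod_(k | i != k) B)).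
    apply: ler_prod => k _; rewrite normr_ge0 /=; exact: hA.
  rewrite prodr_const; apply: ler_weXn2l => //; rewrite -[X in (_ <= X)%N]card_ord; exact: max_card.
rewrite [X in _ <= X](bigID (fun s : {perm 'I_n} => s i == j)) /= lerDl.
apply: sumr_ge0 => s _; apply: exprn_ge0; exact: le_trans B1.
Qed.

Variable d : nat.

Definition dd (th : R) (j : 'I_d.+1) : R := if j == ord_max then th ^- d else th.

Lemma Dmat_mul (th : R) (w : 'rV[R]_(d.+1)) j : (w *m Dmat d th) 0 j = w 0 j * dd th j.
Proof.
rewrite !mxE (bigD1 j) //= big1 ?addr0; first by rewrite !mxE eqxx.
by move=> k /negPf hk; rewrite !mxE hk mulr0.
Qed.

Lemma Dmat_unit (th : R) : 0 < th -> Dmat d th \in unitmx.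
Proof.
move=> th0.
have -> : Dmat d th = diag_mx (\row_j dd th j).
  by apply/matrixP => i j; rewrite !mxE /dd; case: eqP => [->|]; rewrite ?eqxx ?mulr1n ?mulr0n.
rewrite unitmxE det_diag unitfE; apply/prodf_neq0 => i _; rewrite mxE /dd.

by case: ifP => _; rewrite ?invr_eq0 ?expf_eq0 (gt_eqF th0) /= ?andbF.
Qed.

Lemma Dinv_entry (th : R) (L : 'rV[R]_(d.+1)) j : 0 < th ->
  L 0 j = (L *m invmx (Dmat d th)) 0 j * dd th j.
Proof. by move=> th0; rewrite -Dmat_mul mulmxKV ?Dmat_unit. Qed.

Lemma ord_split (j : 'I_d.+1) : j = ord_max \/ exists i : 'I_d, j = widen_ord (leqnSn d) i.
Proof.
case: (ltnP j d) => hj.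
  by right; exists (Ordinal hj); apply: val_inj.
left; apply: val_inj => /=; apply/eqP; rewrite eqn_leq hj andbT -ltnS ltn_ord.
done.
Qed.

Definition ext (t : 'rV[R]_d) : 'rV[R]_(d.+1) :=
  \row_(j < d.+1) (match @insub _ (fun k => k < d)%N 'I_d (val j) with Some i => t 0 i | None => 0 end).

Lemma xpart_ext t : xpart (ext t) = t.
Proof.
apply/rowP => i; rewrite !mxE /=.
rewrite (@insubT _ (fun k => k < d)%N 'I_d i (ltn_ord i)) /=.
by congr (t 0 _); apply: val_inj.
Qed.

Lemma ypart_ext t : ypart (ext t) = 0.
Proof. by rewrite /ypart mxE insubN //= ltnn. Qed.


Lemma bound_from_bounded m n (S : set 'M[R]_(m,n)) : bounded_set S ->
  exists r : R, 1 <= r /\ forall A, S A -> forall i j, `|A i j| <= r.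
Proof.
case=> r [rreal hr]; exists (`|r| + 1); split; first by rewrite lerDr.
move=> A SA i j; apply: (le_trans (entry_le_norm A i j)).
apply: (hr (`|r| + 1)) => //.
by apply: (le_lt_trans (real_ler_norm rreal)); rewrite ltrDl.
Qed.

Lemma adj_bound n (A : 'M[R]_n) (B : R) : 1 <= B ->
  (forall i j, `|A i j| <= B) -> forall i j,
  `|\adj A i j| <= n`!%:R * B ^+ n.
Proof. by move=> B1 hA i j; rewrite mxE; apply: cofactor_bound. Qed.


Lemma box (D : set 'rV[R]_d) (kk : 'M[R]_(d.+1)) (b : 'rV[int]_(d.+1))
  (rK rD th : R) (N : nat) t :
  \det kk = 1 -> 1 <= rK -> (forall i j, `|kk i j| <= rK) -> 0 < th -> 0 <= rD ->
  (forall x, D x -> forall i j, `|x i j| <= rD) ->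
  (d.+1)%:R * (rD *+ 2 * th + th ^+ d.+1 * th ^- d) * ((d.+1)`!%:R * rK ^+ d.+1) <= N%:R ->
  D t -> D (xpart (map_mx intr b *m kk *m invmx (Dmat d th)) + t) ->
  0 < ypart (map_mx intr b *m kk *m invmx (Dmat d th)) <= th ^+ d.+1 ->
  forall j, (`|b ord0 j| <= N)%N.
Proof.
move=> dk rK1 hK th0 rD0 hD hN Dt Dwt hy.
set w := _ *m invmx _ in Dwt hy.
set u := map_mx intr b *m kk.
set Rv := rD *+ 2 * th + th ^+ d.+1 * th ^- d.
have hy0 := (andP hy).1; have hy1 := (andP hy).2.
have hu : forall j, `|u 0 j| <= Rv.
  move=> j; rewrite /u (Dinv_entry th (map_mx intr b *m kk) j th0) -/w normrM /Rv.
  case: (ord_split j) => [->|[i ->]].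
    have hi : 0 <= th ^- d by rewrite invr_ge0 exprn_ge0 // ltW.
    rewrite /dd eqxx (ger0_norm hi) (ger0_norm (ltW hy0)).
    apply: ler_wpDl.
      by apply: mulr_ge0; [rewrite mulrn_wge0|exact: ltW].
    by apply: ler_wpM2r.
  have -> : dd th (widen_ord (leqnSn d) i) = th.
    by rewrite /dd; case: eqP => // /(congr1 val) /= /eqP; rewrite ltn_eqF.
  rewrite (gtr0_norm th0); apply: ler_wpDr.
    by apply: mulr_ge0; rewrite ?exprn_ge0 ?invr_ge0 ?exprn_ge0 ?ltW.
  apply: ler_wpM2r; first exact: ltW.
  have -> : w 0 (widen_ord (leqnSn d) i) = (xpart w + t) 0 i - t 0 i.
    by rewrite !mxE addrK.
  by rewrite mulr2n; apply: (le_trans (ler_normB _ _)); apply: lerD; apply: hD.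
have hb : map_mx intr b = u *m \adj kk.
  by rewrite /u -mulmxA mul_mx_adj dk mulmx1.
move=> j.
have : `|(b 0 j)%:~R : R| <= N%:R.
  have -> : (b 0 j)%:~R = (map_mx intr b : 'rV[R]_(d.+1)) 0 j by rewrite mxE.
  rewrite hb mxE; apply: (le_trans (ler_norm_sum _ _ _)).
  apply: le_trans hN.
  apply: (@le_trans _ _ (\sum_(i < d.+1) Rv * ((d.+1)`!%:R * rK ^+ d.+1))).
    apply: ler_sum => i _; rewrite normrM; apply: ler_pM => //.
    exact: adj_bound.
  by rewrite sumr_const card_ord -[X in X <= _]mulr_natl mulrA /Rv.
rewrite -intr_norm -[N%:R]/((N%:Z)%:~R : R) ler_int -abszE lez_nat.
by [].
Qed.


Definition bk {N} (k : 'rV['I_(N+N).+1]_(d.+1)) : 'rV[int]_(d.+1) :=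
  \row_j ((k ord0 j : nat)%:Z - N%:Z).

Lemma box_k (N : nat) (b : 'rV[int]_(d.+1)) : (forall j, (`|b ord0 j| <= N)%N) ->
  exists k : 'rV['I_(N+N).+1]_(d.+1), bk k = b.
Proof.
move=> hb; exists (\row_j inord (absz (b ord0 j + N%:Z))).
apply/rowP => j; rewrite !mxE inordK; have := hb j; rewrite ?ord1; move: (b ord0 j) => z hz.
  lia.
lia.
Qed.

Lemma exist_pt (D : set 'rV[R]_d) (Q : 'M[R]_(d.+1)) (th th' : R) t :
  convex D -> 0 < th' -> th' < th -> covers Q (cyl D) th' -> D t ->
  exists a : 'rV[int]_(d.+1),
    D (xpart (map_mx intr a *m Q *m invmx (Dmat d th)) + t) /\
    0 < ypart (map_mx intr a *m Q *m invmx (Dmat d th)) <= th ^+ d.+1.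
Proof.
move=> cD th'0 th'th hc Dt.
have th0 : 0 < th by apply: lt_trans th'th.
have [aa [l [[haD hay] [[a el] e]]]] := hc (th' *: ext t).
exists (-a); set v := _ *m invmx _.
have hL : forall j, (map_mx intr (-a) *m Q) 0 j = th' * aa 0 j - th' * ext t 0 j.
  move=> j; have e' := congr1 (fun z : 'rV[R]_(d.+1) => z 0 j) e; rewrite /= !mxE in e'.
  have -> : map_mx intr (-a) *m Q = - l by rewrite el map_mxN mulNmx.
  rewrite !mxE; lra.
have hvx : forall i, v 0 (widen_ord (leqnSn d) i) =
    (th' * aa 0 (widen_ord (leqnSn d) i) - th' * t 0 i) / th.
  move=> i.
  have := Dinv_entry th (map_mx intr (-a) *m Q) (widen_ord (leqnSn d) i) th0.
  rewrite -/v hL /dd.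
  have -> : (widen_ord (leqnSn d) i == ord_max) = false.
    by apply/negP => /eqP /(congr1 val) /= /eqP; rewrite ltn_eqF.
  have -> : ext t 0 (widen_ord (leqnSn d) i) = t 0 i.
    by rewrite -[in RHS](xpart_ext t) [in RHS]mxE.
  by move=> h; rewrite h mulfK // gt_eqF.
have hv : ypart v = th' * ypart aa * th ^+ d.
  have := Dinv_entry th (map_mx intr (-a) *m Q) ord_max th0.
  rewrite -/v hL /dd eqxx.
  have -> : ext t 0 ord_max = 0 by have := ypart_ext t.
  move=> h.
  rewrite /ypart -[v 0 ord_max](mulfK (_ : th ^- d != 0)); last first.
    by rewrite invr_eq0 expf_eq0 gt_eqF // andbF.
  by rewrite -h mulr0 subr0 invrK.
clearbody v.
split.
  have -> : xpart v + t = (th' / th) *: xpart aa + (1 - th' / th) *: t.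
    apply/rowP => i; rewrite !mxE hvx.
    by field; rewrite gt_eqF.
  apply: cD => //; first by rewrite divr_ge0 // ltW.
  by rewrite ler_pdivrMr // mul1r ltW.
have [ya0 ya1] := andP hay.
rewrite hv; apply/andP; split.
  by rewrite mulr_gt0 // ?mulr_gt0 // exprn_gt0.
rewrite exprS; apply: ler_wpM2r; first by rewrite exprn_ge0 // ltW.
rewrite -[th]mulr1; apply: ler_pM => //; exact: ltW.
Qed.

End Helpers.

Theorem proposition2p4 (R : realType) (d : nat)
  (D : set 'rV[R]_d) (K : set 'M[R]_(d.+1)) (theta : R) :
  bounded_set D -> convex D -> interior D !=set0 ->
  K `<=` @SLR R d -> compact K ->
  0 < theta ->
  (rhobar (GammaK K) (cyl D) < theta%:E)%E ->
  exists Ctheta : nat, forall M : 'M[R]_(d.+1),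
    shifted (GammaK K) theta M -> GG_le D M Ctheta.
Proof.
move=> hDb hDc _ hKS hKc th0 hrho.
have [rD [rD1 hrD]] := bound_from_bounded _ _ _ _ hDb.
have [rK [rK1 hrK]] := bound_from_bounded _ _ _ _ (compact_bounded hKc).
set bnd := (d.+1)%:R * (rD *+ 2 * theta + theta ^+ d.+1 * theta ^- d) *
  ((d.+1)`!%:R * rK ^+ d.+1).
set N := (Num.trunc bnd).+1.
have hN : bnd <= N%:R by apply: ltW; apply: truncnS_gt.
have rD0 : 0 <= rD by apply: le_trans rD1.
exists (((N + N).+1) ^ (d.+1))%N.
move=> M [g [M' [hg [hM' eM]]]].
case: hM' => g' [kk [hg' [hkk eM']]].
have [G eG] := int_mx _ _ _ hg.2.
have [G' eG'] := int_mx _ _ _ hg'.2.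
set H := G *m G'.
have eQ : M = map_mx intr H *m kk *m invmx (Dmat d theta).
  by rewrite eM eM' eG eG' map_mxM !mulmxA.
set Q := map_mx intr H *m kk.
have hQ : GammaK K Q.
  exists (map_mx intr H), kk; split; last by split.
  split; first by rewrite map_mxM det_mulmx -eG -eG' hg.1 hg'.1 mulr1.
  by move=> i j; exists (H i j); rewrite mxE.
have hrhoQ : (rho Q (cyl D) < theta%:E)%E.
  apply: le_lt_trans hrho; apply: ereal_sup_ubound; by exists Q.
have [y [th' [th'0 hcov] <-] hy] := ereal_inf_lt hrhoQ.
rewrite lte_fin in hy.
have dk : \det kk = 1 := hKS kk hkk.
set yk := fun k : 'rV['I_(N+N).+1]_(d.+1) =>
  ypart (map_mx intr (bk _ k) *m kk *m invmx (Dmat d theta)).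
exists [seq (yk k)%:E | k <- enum 'rV['I_(N+N).+1]_(d.+1)].
split; first by rewrite size_map -cardE card_mx card_ord mul1n.
move=> t Dt.
have hbox : forall b : 'rV[int]_(d.+1),
    D (xpart (map_mx intr b *m kk *m invmx (Dmat d theta)) + t) ->
    0 < ypart (map_mx intr b *m kk *m invmx (Dmat d theta)) <= theta ^+ d.+1 ->
    exists k : 'rV['I_(N+N).+1]_(d.+1), bk _ k = b.
  move=> b h1 h2; apply: box_k.
  move=> j.
  exact: (box R d D kk b rK rD theta N t dk rK1 (hrK kk hkk) th0 rD0 hrD hN Dt h1 h2 j).
have hlat : forall a : 'rV[int]_(d.+1), map_mx intr a *m M =
    map_mx intr (a *m H) *m kk *m invmx (Dmat d theta).
  by move=> a; rewrite eQ !map_mxM !mulmxA.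
have [a0 [ha1 ha2]] := exist_pt _ _ _ _ _ _ _ hDc th'0 hy hcov Dt.
have eQa : map_mx intr a0 *m Q *m invmx (Dmat d theta) =
    map_mx intr (a0 *m H) *m kk *m invmx (Dmat d theta).
  by rewrite /Q !map_mxM !mulmxA.
rewrite eQa in ha1 ha2.
have [k0 ek0] := hbox _ ha1 ha2.
have hk0 : Fset D M t (yk k0).
  split; first by rewrite /yk ek0; exact: (andP ha2).1.
  exists (map_mx intr a0 *m M); split; first by exists a0.
  by rewrite hlat /yk ek0.
have hsmall : forall z, Fset D M t z -> z <= theta ^+ d.+1 ->
    exists k, yk k = z.
  move=> z [z0 [v [[a ev] [eyv Dv]]]] hz.
  rewrite ev hlat in eyv Dv.
  have [k ek] := hbox (a *m H) Dv (ltac:(by rewrite eyv z0 hz)).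
  by exists k; rewrite /yk ek.
set P := fun k => `[< Fset D M t (yk k) >].
have Pk0 : P k0 by apply/asboolP.
case: (arg_minP yk Pk0) => km /asboolP Pkm hmin.
have lbm : forall z, Fset D M t z -> yk km <= z.
  move=> z Fz; case: (lerP z (theta ^+ d.+1)) => hz.
    have [k ekz] := hsmall z Fz hz; rewrite -ekz; apply: hmin.
    by apply/asboolP; rewrite ekz.
  apply: le_trans (ltW hz); apply: le_trans (hmin k0 Pk0) _.
  by rewrite /yk ek0; exact: (andP ha2).2.
have -> : F D M t = (yk km)%:E.
  rewrite /F asboolT; last by exists (yk km).
  apply/le_anti/andP; split.
    by apply: ereal_inf_lbound; exists (yk km).
  by apply/ereal_infP => _ [z Fz <-]; rewrite lee_fin; exact: lbm.
by apply: map_f; exact: mem_enum.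
Qed.
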